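(* Consider a normal extremal (with $M=1$) starting at the identity, with covector data $\varphi_i=\psi_i(0)$, $i=1,\dots,4$. Then for all $t\in\mathbb R$: (i) $\psi_4\equiv\varphi_4$, $\psi_3=\varphi_3+\tfrac12\varphi_4x$, $\psi_2=\varphi_2+\tfrac12\varphi_3x+\tfrac16\varphi_4x^2$, $\psi_1=\varphi_1-\tfrac12\varphi_3y-\tfrac16\varphi_4(xy+3z)$, and hence $h_1=\varphi_1-(\varphi_3+\tfrac12\varphi_4x)y-\varphi_4z$, $h_2=\varphi_2+(\varphi_3+\tfrac12\varphi_4x)x$; (ii) a.e. $\dot h_1=-(\varphi_3+\varphi_4x)u_2$, $\dot h_2=(\varphi_3+\varphi_4x)u_1$, and the quantity $\tfrac12(\varphi_3+\varphi_4x(t))^2-\varphi_4h_2(t)$ is constant, equal to $\tfrac12\varphi_3^2-\varphi_2\varphi_4$; (iii) $\varphi_1x(t)+\varphi_2y(t)+\bigl(2\varphi_3+\tfrac12\varphi_4x(t)\bigr)z(t)+3\varphi_4v(t)=t$; (iv) with $\theta(t)$ the angle function, $\theta$ is continuously differentiable and $\varphi_3+\varphi_4x(t)=r^2(\theta(t))\dot\theta(t)$, so $\dot\theta^2=\dfrac{\varphi_3^2+2\varphi_4(r(\theta)\sin\theta-\varphi_2)}{r^4(\theta)}$.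
   Context: Let $\mathfrak g$ be the Engel algebra with basis $X,Y,Z,V$, $[X,Y]=Z$, $[X,Z]=V$, all other brackets of basis elements zero; $G$ the corresponding connected simply connected Lie group, with coordinates of the first kind $(x,y,z,v)$ ($\exp(xX+yY+zZ+vV)\leftrightarrow(x,y,z,v)$, identity $=0$). Let $F$ be an arbitrary norm on $\mathbb R^2$, $U=\{u\in\mathbb R^2:F(u)\le1\}$, where $(u_1,u_2)$ is identified with $u_1X(e)+u_2Y(e)$. The left-invariant time-optimal control system is $\dot x=u_1,\ \dot y=u_2,\ \dot z=\tfrac12(xu_2-yu_1),\ \dot v=-\tfrac12(z+\tfrac16xy)u_1+\tfrac1{12}x^2u_2$, with measurable control $u(t)\in U$ and $x(0)=y(0)=z(0)=v(0)=0$. An extremal is a trajectory $(x,y,z,v)(t)$, $t\in\mathbb R$, with control $u(t)$, for which there is a nowhere vanishing absolutely continuous $\psi(t)=(\psi_1,\psi_2,\psi_3,\psi_4)(t)$ satisfying a.e. $\dot\psi_1=\tfrac1{12}\psi_4yu_1-(\tfrac12\psi_3+\tfrac16\psi_4x)u_2$, $\dot\psi_2=(\tfrac12\psi_3+\tfrac1{12}\psi_4x)u_1$, $\dot\psi_3=\tfrac12\psi_4u_1$, $\dot\psi_4=0$, and the maximum condition $h_1(t)u_1(t)+h_2(t)u_2(t)=\max_{u\in U}(h_1(t)u_1+h_2(t)u_2)=M$ for a.e. $t$, where $h_1=\psi_1-\tfrac12\psi_3y-\tfrac1{12}\psi_4xy-\tfrac12\psi_4z$, $h_2=\psi_2+\tfrac12\psi_3x+\tfrac1{12}\psi_4x^2$,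 and $M\ge0$ is a constant. It is abnormal if $M=0$ and normal if $M>0$; in the normal case $\psi$ is rescaled so that $M=1$. Write $\varphi_i=\psi_i(0)$. Let $F_U(h)=\max_{u\in U}h\cdot u$ and $U^*=\{h:F_U(h)\le1\}$ (polar figure). Let $r(\theta)>0$ be the polar equation of $\partial U^*$, i.e. $F_U(r(\theta)\cos\theta,r(\theta)\sin\theta)=1$. For $M=1$, $(h_1(t),h_2(t))\in\partial U^*$, and $\theta(t)$ denotes a continuous function with $(h_1(t),h_2(t))=r(\theta(t))(\cos\theta(t),\sin\theta(t))$. *)

(* Defs.v *)
From Stdlib Require Import Reals Lra.
Open Scope R_scope.

Fixpoint rsum (f : nat -> R) (n : nat) : R :=
  match n with O => 0 | S k => rsum f k + f k end.

Definition negligible (A : R -> Prop) : Prop :=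
  forall eps, 0 < eps -> exists a b : nat -> R,
    (forall n, a n <= b n) /\
    (forall t, A t -> exists n, a n < t < b n) /\
    (forall N, rsum (fun n => b n - a n) N < eps).

Definition ae (P : R -> Prop) : Prop := negligible (fun t => ~ P t).

Definition abs_cont_on (f : R -> R) (a b : R) : Prop :=
  forall eps, 0 < eps -> exists delta, 0 < delta /\
    forall (n : nat) (c d : nat -> R),
      (forall i, (i < n)%nat -> a <= c i /\ c i <= d i /\ d i <= b) ->
      (forall i, (S i < n)%nat -> d i <= c (S i)) ->
      rsum (fun i => d i - c i) n < delta ->
      rsum (fun i => Rabs (f (d i) - f (c i))) n < eps.

Definition loc_abs_cont (f : R -> R) : Prop :=
  forall a b, a <= b -> abs_cont_on f a b.

Definition is_norm2 (F : R -> R -> R) : Prop :=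
  (forall w1 w2, 0 <= F w1 w2) /\
  (forall w1 w2, F w1 w2 = 0 -> w1 = 0 /\ w2 = 0) /\
  (forall a w1 w2, F (a * w1) (a * w2) = Rabs a * F w1 w2) /\
  (forall w1 w2 v1 v2, F (w1 + v1) (w2 + v2) <= F w1 w2 + F v1 v2).

(* F_U(h1,h2) = m, where F_U(h) = max_{u in U} h.u, U = {F <= 1} *)
Definition FU_is (F : R -> R -> R) (h1 h2 m : R) : Prop :=
  is_lub (fun s => exists w1 w2, F w1 w2 <= 1 /\ s = h1 * w1 + h2 * w2) m.

Definition ham1 (p1 p3 p4 x y z : R) : R :=
  p1 - /2 * p3 * y - /12 * p4 * x * y - /2 * p4 * z.
Definition ham2 (p2 p3 p4 x : R) : R :=
  p2 + /2 * p3 * x + /12 * p4 * x ^ 2.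

(* Main.v *)
Require Import Defs.
From Stdlib Require Import Reals Lra Lia Classical FunctionalExtensionality.
Open Scope R_scope.


Lemma rsum_ext f g m : (forall i, (i < m)%nat -> f i = g i) -> rsum f m = rsum g m.
Proof. induction m; simpl; intros H; auto. rewrite IHm by (intros; apply H; lia). rewrite (H m) by lia; auto. Qed.

Lemma rsum_le f g m : (forall i, (i < m)%nat -> f i <= g i) -> rsum f m <= rsum g m.
Proof. induction m; simpl; intros H; [lra|]. assert (f m <= g m) by (apply H; lia). assert (rsum f m <= rsum g m) by (apply IHm; intros; apply H; lia). lra. Qed.

Lemma rsum_plus f g m : rsum (fun i => f i + g i) m = rsum f m + rsum g m.
Proof. induction m; simpl; [lra|]. rewrite IHm; ring. Qed.

Lemma rsum_scal k f m : rsum (fun i => k * f i) m = k * rsum f m.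
Proof. induction m; simpl; [ring|]. rewrite IHm; ring. Qed.

Lemma rsum_nonneg f m : (forall i, 0 <= f i) -> 0 <= rsum f m.
Proof. induction m; simpl; intros H; [lra|]. specialize (IHm H). specialize (H m). lra. Qed.

Lemma rsum_mono f n m : (forall i, 0 <= f i) -> (n <= m)%nat -> rsum f n <= rsum f m.
Proof. intros H Hle. induction Hle; [lra|]. simpl. specialize (H m). lra. Qed.

Lemma rsum_term f m i : (forall j, (j < m)%nat -> 0 <= f j) -> (i < m)%nat -> f i <= rsum f m.
Proof.
  induction m; intros H Hi; [lia|]. simpl.
  assert (0 <= rsum f m) by (clear IHm Hi; induction m; simpl; [lra|];
     assert (0 <= f m) by (apply H; lia); assert (0<= rsum f m) by (apply IHm; intros; apply H; lia); lra).
  destruct (Nat.eq_dec i m). subst. lra.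
  assert (f i <= rsum f m) by (apply IHm; [intros; apply H; lia| lia]).
  assert (0 <= f m) by (apply H; lia). lra.
Qed.

Lemma rsum_indic B k v N : (k < N)%nat ->
  rsum (fun n => B n + (if Nat.eqb n k then v else 0)) N = rsum B N + v.
Proof.
  induction N; intros H; [lia|]. simpl.
  destruct (Nat.eq_dec k N).
  - subst. rewrite Nat.eqb_refl.
    rewrite (rsum_ext _ B) by (intros i Hi; destruct (Nat.eqb_spec i N); [lia|ring]). ring.
  - rewrite IHN by lia. destruct (Nat.eqb_spec N k); [lia|]. ring.
Qed.

Definition inter (f g : nat -> R) (n : nat) : R :=
  if Nat.even n then f (Nat.div2 n) else g (Nat.div2 n).

Lemma inter_even f g k : inter f g (2 * k) = f k.
Proof. unfold inter. rewrite Nat.even_mul, Nat.div2_double. reflexivity. Qed.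
Lemma inter_odd f g k : inter f g (S (2 * k)) = g k.
Proof. unfold inter. rewrite Nat.even_succ, Nat.odd_mul, Nat.div2_succ_double. reflexivity. Qed.

Lemma rsum_inter f g k : rsum (inter f g) (2 * k) = rsum f k + rsum g k.
Proof.
  induction k. simpl; ring.
  replace (2 * S k)%nat with (S (S (2 * k))) by lia.
  change (rsum (inter f g) (S (S (2*k)))) with (rsum (inter f g) (2*k) + inter f g (2*k) + inter f g (S (2*k))).
  rewrite IHk, inter_even, inter_odd. simpl. ring.
Qed.

Lemma negligible_sub (A B : R -> Prop) : (forall t, A t -> B t) -> negligible B -> negligible A.
Proof.
  intros H HB eps He. destruct (HB eps He) as [a [b [H1 [H2 H3]]]].
  exists a, b. repeat split; auto.
Qed.

Lemma negligible_union (A B : R -> Prop) : negligible A -> negligible B ->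
  negligible (fun t => A t \/ B t).
Proof.
  intros HA HB eps He.
  destruct (HA (eps/2) ltac:(lra)) as [a1 [b1 [H1 [H2 H3]]]].
  destruct (HB (eps/2) ltac:(lra)) as [a2 [b2 [K1 [K2 K3]]]].
  exists (inter a1 a2), (inter b1 b2). split; [|split].
  - intros n. unfold inter. destruct (Nat.even n); auto.
  - intros t [Ht|Ht].
    + destruct (H2 t Ht) as [n Hn]. exists (2*n)%nat. rewrite !inter_even. auto.
    + destruct (K2 t Ht) as [n Hn]. exists (S (2*n))%nat. rewrite !inter_odd. auto.
  - intros N.
    assert (Hnn : forall i, 0 <= inter b1 b2 i - inter a1 a2 i).
    { intros i; unfold inter; destruct (Nat.even i); [specialize (H1 (Nat.div2 i))|specialize (K1 (Nat.div2 i))]; lra. }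
    apply Rle_lt_trans with (rsum (fun n => inter b1 b2 n - inter a1 a2 n) (2 * N)).
    + apply rsum_mono; auto; lia.
    + replace (fun n => inter b1 b2 n - inter a1 a2 n) with
        (inter (fun n => b1 n - a1 n) (fun n => b2 n - a2 n)).
      2:{ extensionality n. unfold inter. destruct (Nat.even n); auto. }
      rewrite rsum_inter. specialize (H3 N). specialize (K3 N). lra.
Qed.

Lemma ae_mono (P Q : R -> Prop) : (forall t, P t -> Q t) -> ae P -> ae Q.
Proof. intros H HP. apply (negligible_sub _ _ (fun t HQ => fun HP => HQ (H t HP)) ) in HP. exact HP. Qed.

Lemma ae_and (P Q : R -> Prop) : ae P -> ae Q -> ae (fun t => P t /\ Q t).
Proof.
  intros HP HQ. apply negligible_sub with (fun t => ~ P t \/ ~ Q t).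
  - intros t H. destruct (classic (P t)); [right|left]; tauto.
  - apply negligible_union; auto.
Qed.


Lemma real_ind (P : R -> Prop) (a b : R) : a <= b -> P a ->
  (forall t, a <= t <= b -> exists g, 0 < g /\ forall s0 s1, a <= s0 -> s0 <= t <= s1 ->
      s1 <= b -> s1 - s0 < g -> P s0 -> P s1) -> P b.
Proof.
  intros Hab Pa Hstep.
  set (S := fun s => a <= s <= b /\ forall u, a <= u <= s -> P u).
  assert (Hb : bound S) by (exists b; intros s [Hs _]; lra).
  assert (Hne : exists x, S x) by (exists a; split; [lra|]; intros u Hu; replace u with a by lra; auto).
  destruct (completeness S Hb Hne) as [c [Hub Hlub]].
  assert (Hac : a <= c) by (apply Hub; destruct Hne; unfold S; split; [lra|]; intros u Hu; replace u with a by lra; auto).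
  assert (Hcb : c <= b) by (apply Hlub; intros s [Hs _]; lra).
  assert (Hbelow : forall u, u < c -> exists s, S s /\ u < s).
  { intros u Hu. apply NNPP. intro Hn.
    assert (c <= u). { apply Hlub. intros s Hs. apply Rnot_lt_le. intro Hlt. apply Hn. exists s; auto. }
    lra. }
  destruct (Hstep c (conj Hac Hcb)) as [g [Hg Hst]].
  assert (Hall : forall u, a <= u <= c -> P u).
  { intros u Hu. destruct (Rlt_dec u c) as [Hlt|Hge].
    - destruct (Hbelow u Hlt) as [s [[Hs1 Hs2] Hus]]. apply Hs2. lra.
    - assert (u = c) by lra. subst u.
      destruct (Req_dec a c) as [Hea|Hnea]. rewrite <- Hea. auto.
      destruct (Hbelow (Rmax a (c - g/2))) as [s [[Hs1 Hs2] Hus]].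
      { unfold Rmax; destruct (Rle_dec a (c - g/2)); lra. }
      assert (Hsc : s <= c) by (apply Hub; split; auto).
      assert (Hm1 : a <= Rmax a (c - g/2)) by apply Rmax_l.
      assert (Hm2 : c - g/2 <= Rmax a (c - g/2)) by apply Rmax_r.
      apply (Hst s c); try lra. apply Hs2; lra. }
  destruct (Req_dec c b) as [Heq|Hneq].
  - apply Hall. lra.
  - exfalso. set (s' := Rmin b (c + g/2)).
    assert (s' <= b) by apply Rmin_l. assert (s' <= c + g/2) by apply Rmin_r.
    assert (c < s') by (unfold s', Rmin; destruct (Rle_dec b (c + g/2)); lra).
    assert (S s').
    { split; [lra|]. intros u Hu. destruct (Rle_dec u c). apply Hall; lra.
      apply (Hst c u); try lra. apply Hall; lra. }
    assert (s' <= c) by (apply Hub; auto). lra.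
Qed.

Lemma deriv_bound f t l e : derivable_pt_lim f t l -> 0 < e ->
  exists g, 0 < g /\ forall s, Rabs (s - t) < g -> Rabs (f s - f t) <= (Rabs l + e) * Rabs (s - t).
Proof.
  intros Hd He. destruct (Hd e He) as [[g Hg] H]. exists g. split; auto. intros s Hs. simpl in H.
  destruct (Req_dec s t) as [E|E]. subst. replace (f t - f t) with 0 by ring. rewrite Rminus_diag, Rabs_R0. lra.
  specialize (H (s - t) ltac:(lra) Hs). replace (t + (s - t)) with s in H by ring.
  assert (Hst : Rabs (s - t) > 0) by (apply Rabs_pos_lt; lra).
  replace (f s - f t) with (((f s - f t) / (s - t) - l) * (s - t) + l * (s - t)) by (field; lra).
  eapply Rle_trans. apply Rabs_triang. rewrite !Rabs_mult. nra.
Qed.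

Definition Inv (f : R -> R) (a K e : R) (aa bb : nat -> R) (s : R) : Prop :=
 exists (m : nat) (c d : nat -> R) (B : nat -> R) (N : nat),
   (forall i, (i < m)%nat -> a <= c i /\ c i <= d i /\ d i <= s) /\
   (forall i, (S i < m)%nat -> d i <= c (S i)) /\
   rsum (fun i => d i - c i) m <= rsum B N /\
   (forall n, 0 <= B n /\ B n <= Rmax 0 (Rmin s (bb n) - aa n)) /\
   Rabs (f s - f a) <= (K + e) * (s - a) + rsum (fun i => Rabs (f (d i) - f (c i))) m.

Lemma Rmax_mono0 s0 s1 b a : s0 <= s1 -> Rmax 0 (Rmin s0 b - a) <= Rmax 0 (Rmin s1 b - a).
Proof. intros. unfold Rmax, Rmin. repeat destruct Rle_dec; lra. Qed.

Lemma Inv_good f a K e aa bb s0 s1 : 0 <= K + e -> s0 <= s1 ->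
  Rabs (f s1 - f s0) <= (K + e) * (s1 - s0) ->
  Inv f a K e aa bb s0 -> Inv f a K e aa bb s1.
Proof.
  intros HKe Hs Hf [m [c [d [B [N [I1 [I2 [I3 [I4 I5]]]]]]]]].
  exists m, c, d, B, N. split; [|split; [|split; [|split]]]; auto.
  - intros i Hi. destruct (I1 i Hi). lra.
  - intros n. destruct (I4 n). split; auto. eapply Rle_trans; eauto. apply Rmax_mono0; auto.
  - replace (f s1 - f a) with ((f s1 - f s0) + (f s0 - f a)) by ring.
    eapply Rle_trans. apply Rabs_triang. lra.
Qed.

Lemma Inv_bad f a K e aa bb s0 s1 k : 0 <= K + e -> a <= s0 -> s0 <= s1 ->
  aa k < s0 -> s1 < bb k ->
  Inv f a K e aa bb s0 -> Inv f a K e aa bb s1.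
Proof.
  intros HKe Ha Hs Hk1 Hk2 [m [c [d [B [N [I1 [I2 [I3 [I4 I5]]]]]]]]].
  exists (S m), (fun i => if Nat.eqb i m then s0 else c i), (fun i => if Nat.eqb i m then s1 else d i),
    (fun n => B n + (if Nat.eqb n k then s1 - s0 else 0)), (Nat.max N (S k)).
  split; [|split; [|split; [|split]]].
  - intros i Hi. destruct (Nat.eqb_spec i m). lra. destruct (I1 i ltac:(lia)). lra.
  - intros i Hi. destruct (Nat.eqb_spec i m); [lia|]. destruct (Nat.eqb_spec (S i) m).
    + destruct (I1 i ltac:(lia)). lra.
    + apply I2; lia.
  - simpl. rewrite Nat.eqb_refl. rewrite (rsum_ext _ (fun i => d i - c i)).
    2:{ intros i Hi. destruct (Nat.eqb_spec i m); [lia|auto]. }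
    rewrite rsum_indic by lia.
    assert (rsum B N <= rsum B (Nat.max N (S k))) by (apply rsum_mono; [intros n; apply I4|lia]). lra.
  - intros n. destruct (I4 n) as [J1 J2]. destruct (Nat.eqb_spec n k).
    + subst. split; [lra|]. revert J2. unfold Rmax, Rmin. repeat destruct Rle_dec; lra.
    + split; [lra|]. rewrite Rplus_0_r. eapply Rle_trans; eauto. apply Rmax_mono0; auto.
  - simpl. rewrite Nat.eqb_refl. rewrite (rsum_ext _ (fun i => Rabs (f (d i) - f (c i)))).
    2:{ intros i Hi. destruct (Nat.eqb_spec i m); [lia|auto]. }
    replace (f s1 - f a) with ((f s1 - f s0) + (f s0 - f a)) by ring.
    eapply Rle_trans. apply Rabs_triang. nra.
Qed.

Lemma KLg (f : R -> R) (a b K : R) : a <= b -> 0 <= K -> abs_cont_on f a b ->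
  negligible (fun t => a <= t <= b /\ ~ (exists l, derivable_pt_lim f t l /\ Rabs l <= K)) ->
  Rabs (f b - f a) <= K * (b - a).
Proof.
  intros Hab HK Hac Hneg.
  assert (Main : forall e, 0 < e -> Rabs (f b - f a) <= (K + e) * (b - a) + e).
  { intros e He.
    destruct (Hac e He) as [del [Hdel Hd]].
    destruct (Hneg del Hdel) as [aa [bb [C1 [C2 C3]]]].
    assert (HI : Inv f a K e aa bb b).
    { apply real_ind with a; auto.
      - exists O, (fun _ => 0), (fun _ => 0), (fun _ => 0), O. simpl.
        split; [intros; lia|split; [intros; lia|split; [lra|split]]].
        intros n; split; [lra|apply Rmax_l].
        rewrite Rminus_diag, Rabs_R0. lra.
      - intros t Ht. destruct (classic (exists l, derivable_pt_lim f t l /\ Rabs l <= K)) as [[l [Hl1 Hl2]]|Hbad].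
        + destruct (deriv_bound f t l e Hl1 He) as [g [Hg Hgb]]. exists g. split; auto.
          intros s0 s1 Ha0 Hst Hb1 Hg01 HI. apply Inv_good with s0; [lra|lra| |exact HI].
          assert (A1 : Rabs (f s1 - f t) <= (Rabs l + e) * (s1 - t)).
          { destruct (Req_dec s1 t). subst. rewrite Rminus_diag, Rabs_R0. lra.
            rewrite <- (Rabs_right (s1 - t)) by lra. apply Hgb. rewrite Rabs_right by lra. lra. }
          assert (A2 : Rabs (f s0 - f t) <= (Rabs l + e) * (t - s0)).
          { destruct (Req_dec s0 t). subst. rewrite Rminus_diag, Rabs_R0. lra.
            replace (t - s0) with (Rabs (s0 - t)) by (rewrite Rabs_left by lra; ring). apply Hgb. rewrite Rabs_left by lra. lra. }
          replace (f s1 - f s0) with ((f s1 - f t) - (f s0 - f t)) by ring.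
          eapply Rle_trans. apply Rabs_triang. rewrite Rabs_Ropp. nra.
        + destruct (C2 t (conj Ht Hbad)) as [k Hk].
          exists (Rmin (t - aa k) (bb k - t)). split. unfold Rmin; destruct Rle_dec; lra.
          intros s0 s1 Ha0 Hst Hb1 Hg01 HI.
          assert (Rmin (t - aa k) (bb k - t) <= t - aa k) by apply Rmin_l.
          assert (Rmin (t - aa k) (bb k - t) <= bb k - t) by apply Rmin_r.
          apply Inv_bad with s0 k; try lra; auto. }
    destruct HI as [m [c [d [B [N [I1 [I2 [I3 [I4 I5]]]]]]]]].
    assert (rsum (fun i => Rabs (f (d i) - f (c i))) m < e).
    { apply Hd; auto.
      eapply Rle_lt_trans. apply I3. eapply Rle_lt_trans. 2: apply (C3 N).
      apply rsum_le. intros n _. destruct (I4 n) as [_ J]. specialize (C1 n). revert J.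
      unfold Rmax, Rmin; repeat destruct Rle_dec; lra. }
    lra. }
  set (D := Rabs (f b - f a)). fold D in Main.
  destruct (Rle_dec D (K * (b - a))) as [ok|nok]; auto. exfalso.
  set (e := (D - K * (b - a)) / (2 * (b - a + 1))).
  assert (He : 0 < e) by (unfold e; apply Rdiv_lt_0_compat; lra).
  specialize (Main e He).
  assert (e * (b - a + 1) = (D - K * (b - a)) / 2) by (unfold e; field; lra).
  nra.
Qed.


Lemma AC_single f a b : abs_cont_on f a b -> forall e, 0 < e -> exists d, 0 < d /\
  forall c1 d1, a <= c1 -> c1 <= d1 -> d1 <= b -> d1 - c1 < d -> Rabs (f d1 - f c1) < e.
Proof.
  intros H e He. destruct (H e He) as [d [Hd Hf]]. exists d; split; auto.
  intros c1 d1 H1 H2 H3 H4.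
  specialize (Hf 1%nat (fun _ => c1) (fun _ => d1)). simpl in Hf.
  assert (X : 0 + Rabs (f d1 - f c1) < e). { apply Hf. intros i Hi; lra. intros i Hi; exfalso; lia. lra. } lra.
Qed.

Lemma lac_cont f : loc_abs_cont f -> continuity f.
Proof.
  intros H t e He. destruct (AC_single f (t-1) (t+1) (H (t-1) (t+1) ltac:(lra)) e He) as [d [Hd Hf]].
  exists (Rmin d 1). split. unfold Rmin; destruct Rle_dec; lra.
  intros x [_ Hx]. simpl in *. unfold R_dist in *.
  assert (Rmin d 1 <= d) by apply Rmin_l. assert (Rmin d 1 <= 1) by apply Rmin_r.
  destruct (Rle_dec t x).
  - rewrite Rabs_right in Hx by lra. apply Hf; lra.
  - rewrite Rabs_left in Hx by lra. rewrite <- Rabs_Ropp. replace (- (f x - f t)) with (f t - f x) by ring. apply Hf; lra.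
Qed.

Lemma cont_bounded f a b : continuity f -> a <= b -> exists M, forall t, a <= t <= b -> Rabs (f t) <= M.
Proof.
  intros Hc Hab. destruct (continuity_ab_maj f a b Hab (fun c _ => Hc c)) as [x1 [H1 _]].
  destruct (continuity_ab_min f a b Hab (fun c _ => Hc c)) as [x2 [H2 _]].
  exists (Rabs (f x1) + Rabs (f x2)). intros t Ht. specialize (H1 t Ht). specialize (H2 t Ht).
  unfold Rabs; repeat destruct Rcase_abs; lra.
Qed.

Lemma ACdom f g1 g2 a b rho C : abs_cont_on g1 a b -> abs_cont_on g2 a b -> 0 < rho -> 0 <= C ->
  (forall c d, a <= c -> c <= d -> d <= b -> d - c < rho ->
     Rabs (f d - f c) <= C * (Rabs (g1 d - g1 c) + Rabs (g2 d - g2 c))) ->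
  abs_cont_on f a b.
Proof.
  intros H1 H2 Hr HC Hdom e He.
  destruct (H1 (e / (2 * (C + 1))) ltac:(apply Rdiv_lt_0_compat; lra)) as [d1 [Hd1 K1]].
  destruct (H2 (e / (2 * (C + 1))) ltac:(apply Rdiv_lt_0_compat; lra)) as [d2 [Hd2 K2]].
  exists (Rmin rho (Rmin d1 d2)).
  assert (Rmin rho (Rmin d1 d2) <= rho) by apply Rmin_l.
  assert (Rmin rho (Rmin d1 d2) <= Rmin d1 d2) by apply Rmin_r.
  assert (Rmin d1 d2 <= d1) by apply Rmin_l. assert (Rmin d1 d2 <= d2) by apply Rmin_r.
  split. unfold Rmin; repeat destruct Rle_dec; lra.
  intros n c d Hcd Hord Hs.
  specialize (K1 n c d Hcd Hord ltac:(lra)). specialize (K2 n c d Hcd Hord ltac:(lra)).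
  apply Rle_lt_trans with (C * (rsum (fun i => Rabs (g1 (d i) - g1 (c i))) n + rsum (fun i => Rabs (g2 (d i) - g2 (c i))) n)).
  - rewrite <- rsum_plus, <- rsum_scal. apply rsum_le. intros i Hi.
    destruct (Hcd i Hi) as [A1 [A2 A3]]. apply Hdom; try lra.
    assert (d i - c i <= rsum (fun i => d i - c i) n).
    { apply (rsum_term (fun i => d i - c i)); auto. intros j Hj. destruct (Hcd j Hj); lra. }
    lra.
  - assert (C * (e / (2 * (C + 1))) < e / 2).
    { apply Rlt_le_trans with ((C+1) * (e / (2 * (C + 1)))).
      assert (0 < e / (2 * (C + 1))) by (apply Rdiv_lt_0_compat; lra). nra.
      right. field. lra. }
    assert (0 <= rsum (fun i => Rabs (g1 (d i) - g1 (c i))) n) by (apply rsum_nonneg; intros; apply Rabs_pos).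
    assert (0 <= rsum (fun i => Rabs (g2 (d i) - g2 (c i))) n) by (apply rsum_nonneg; intros; apply Rabs_pos).
    nra.
Qed.

Lemma lac_const k : loc_abs_cont (fun _ => k).
Proof. intros a b Hab e He. exists 1. split; [lra|]. intros n c d _ _ _.
  rewrite (rsum_ext _ (fun _ => 0)). assert (rsum (fun _ => 0) n = 0) by (induction n; simpl; lra). lra.
  intros; rewrite Rminus_diag, Rabs_R0; auto. Qed.

Lemma lac_id : loc_abs_cont (fun t => t).
Proof. intros a b Hab e He. exists e. split; [lra|]. intros n c d H _ Hs.
  rewrite (rsum_ext _ (fun i => d i - c i)); auto. intros i Hi; destruct (H i Hi); rewrite Rabs_right; lra. Qed.

Lemma lac_plus f g : loc_abs_cont f -> loc_abs_cont g -> loc_abs_cont (fun t => f t + g t).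
Proof. intros Hf Hg a b Hab. apply (ACdom _ f g a b 1 1); auto; try lra.
  intros. replace (f d + g d - (f c + g c)) with ((f d - f c) + (g d - g c)) by ring.
  rewrite Rmult_1_l. apply Rabs_triang. Qed.

Lemma lac_opp f : loc_abs_cont f -> loc_abs_cont (fun t => - f t).
Proof. intros Hf a b Hab. apply (ACdom _ f f a b 1 1); auto; try lra.
  intros. replace (- f d - - f c) with (- (f d - f c)) by ring. rewrite Rabs_Ropp.
  assert (0 <= Rabs (f d - f c)) by apply Rabs_pos. lra. Qed.

Lemma lac_minus f g : loc_abs_cont f -> loc_abs_cont g -> loc_abs_cont (fun t => f t - g t).
Proof. intros Hf Hg. apply (lac_plus f (fun t => - g t)); auto. apply lac_opp; auto. Qed.

Lemma lac_mult f g : loc_abs_cont f -> loc_abs_cont g -> loc_abs_cont (fun t => f t * g t).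
Proof. intros Hf Hg a b Hab.
  destruct (cont_bounded f a b (lac_cont f Hf) Hab) as [M1 HM1].
  destruct (cont_bounded g a b (lac_cont g Hg) Hab) as [M2 HM2].
  assert (0 <= M1) by (eapply Rle_trans; [apply Rabs_pos|apply (HM1 a); lra]).
  assert (0 <= M2) by (eapply Rle_trans; [apply Rabs_pos|apply (HM2 a); lra]).
  apply (ACdom _ f g a b 1 (M1 + M2)); auto; try lra.
  intros c d Hc Hcd Hd _.
  replace (f d * g d - f c * g c) with (f d * (g d - g c) + g c * (f d - f c)) by ring.
  eapply Rle_trans. apply Rabs_triang. rewrite !Rabs_mult.
  specialize (HM1 d ltac:(lra)). specialize (HM2 c ltac:(lra)).
  assert (0 <= Rabs (f d - f c)) by apply Rabs_pos. assert (0 <= Rabs (g d - g c)) by apply Rabs_pos.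
  assert (0 <= Rabs (f d)) by apply Rabs_pos. assert (0 <= Rabs (g c)) by apply Rabs_pos.
  nra. Qed.

Lemma lac_sq f : loc_abs_cont f -> loc_abs_cont (fun t => f t ^ 2).
Proof. intros Hf. replace (fun t => f t ^ 2) with (fun t => f t * f t) by (extensionality t; ring).
  apply lac_mult; auto. Qed.

Ltac lac := repeat first [ apply lac_minus | apply lac_plus | apply lac_opp | apply lac_mult | apply lac_sq
  | apply lac_const | apply lac_id | assumption ].

Lemma ae_const (F : R -> R) : loc_abs_cont F -> ae (fun t => derivable_pt_lim F t 0) ->
  forall s t, F s = F t.
Proof.
  intros Hac Hae.
  assert (W : forall s t, s <= t -> F s = F t).
  { intros s t Hst. assert (Rabs (F t - F s) <= 0 * (t - s)).
    { apply KLg; auto; try lra. eapply negligible_sub; [|exact Hae].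
      intros u [_ Hu] Hd. apply Hu. exists 0. split; auto. rewrite Rabs_R0; lra. }
    assert (0 <= Rabs (F t - F s)) by apply Rabs_pos.
    assert (Rabs (F t - F s) = 0) by lra.
    destruct (Rcase_abs (F t - F s)); [rewrite Rabs_left in H1|rewrite Rabs_right in H1]; lra. }
  intros s t. destruct (Rle_dec s t). auto. symmetry. apply W; lra.
Qed.

Lemma D_eq f t l l' : derivable_pt_lim f t l -> l = l' -> derivable_pt_lim f t l'.
Proof. intros; subst; auto. Qed.
Lemma D_ext f g t l : (forall s, f s = g s) -> derivable_pt_lim g t l -> derivable_pt_lim f t l.
Proof. intros H. replace f with g; auto. extensionality s; auto. Qed.
Lemma D_plus f g t a b : derivable_pt_lim f t a -> derivable_pt_lim g t b ->
  derivable_pt_lim (fun s => f s + g s) t (a + b).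
Proof. intros; apply (derivable_pt_lim_plus f g); auto. Qed.
Lemma D_minus f g t a b : derivable_pt_lim f t a -> derivable_pt_lim g t b ->
  derivable_pt_lim (fun s => f s - g s) t (a - b).
Proof. intros; apply (derivable_pt_lim_minus f g); auto. Qed.
Lemma D_opp f t a : derivable_pt_lim f t a -> derivable_pt_lim (fun s => - f s) t (- a).
Proof. intros; apply (derivable_pt_lim_opp f); auto. Qed.
Lemma D_mult f g t a b : derivable_pt_lim f t a -> derivable_pt_lim g t b ->
  derivable_pt_lim (fun s => f s * g s) t (a * g t + f t * b).
Proof. intros; apply (derivable_pt_lim_mult f g); auto. Qed.
Lemma D_const c t : derivable_pt_lim (fun _ => c) t 0.
Proof. apply derivable_pt_lim_const. Qed.
Lemma D_id t : derivable_pt_lim (fun s => s) t 1.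
Proof. apply derivable_pt_lim_id. Qed.
Lemma D_sq f t a : derivable_pt_lim f t a -> derivable_pt_lim (fun s => f s ^ 2) t (a * f t + f t * a).
Proof. intros. apply D_ext with (fun s => f s * f s). intros; ring. apply D_mult; auto. Qed.

Ltac dtac := repeat first [ apply D_minus | apply D_plus | apply D_opp | apply D_mult | apply D_sq
  | apply D_const | apply D_id | eassumption ].


Lemma sin_half x : 0 <= x <= 1 -> x / 2 <= sin x.
Proof.
  intros H. assert (HP: 1 < PI) by (pose proof PI2_1; pose proof PI_RGT_0; lra).
  destruct (SIN x ltac:(lra) ltac:(lra)) as [A _].
  unfold sin_lb, sin_approx, sin_term in A. cbn [sum_f_R0 Nat.mul Nat.add] in A.
  rewrite !INR_IZR_INZ in A. cbn [Factorial.fact Nat.mul Nat.add Z.of_nat] in A.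
  simpl in A.
  assert (P2 : x^2 <= 1) by (rewrite <- (pow1 2); apply pow_incr; lra).
  assert (P6 : x^6 <= 1) by (rewrite <- (pow1 6); apply pow_incr; lra).
  assert (x^3 <= x) by (replace (x^3) with (x * x^2) by ring; nra).
  assert (x^7 <= x) by (replace (x^7) with (x * x^6) by ring; nra).
  assert (0 <= x^5) by (apply pow_le; lra).
  assert (E3: x*(x*(x*1)) = x^3) by ring. assert (E5: x*(x*(x*(x*(x*1)))) = x^5) by ring.
  assert (E7: x*(x*(x*(x*(x*(x*(x*1)))))) = x^7) by ring.
  rewrite E7, E5, E3 in A. lra.
Qed.

Lemma sin_lower x : Rabs x <= 1 -> Rabs x <= 2 * Rabs (sin x).
Proof.
  intros H. destruct (Rle_dec 0 x).
  - rewrite Rabs_right in H by lra. rewrite (Rabs_right x) by lra.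
    pose proof (sin_half x ltac:(lra)). rewrite Rabs_right; lra.
  - rewrite Rabs_left in H by lra. rewrite (Rabs_left x) by lra.
    pose proof (sin_half (- x) ltac:(lra)). rewrite sin_neg in H0.
    rewrite Rabs_left1; lra.
Qed.

Lemma cont_eps f t e : continuity_pt f t -> 0 < e -> exists d, 0 < d /\
  forall u, Rabs (u - t) < d -> Rabs (f u - f t) < e.
Proof.
  intros Hc He. destruct (Hc e He) as [d [Hd H]]. exists d. split; [lra|]. intros u Hu.
  destruct (Req_dec u t). subst. rewrite Rminus_diag, Rabs_R0; lra.
  apply (H u). split. split; [exact I| auto]. exact Hu.
Qed.

Lemma D_loc f g t l : (exists rho, 0 < rho /\ forall s, Rabs (s - t) < rho -> f s = g s) ->
  derivable_pt_lim g t l -> derivable_pt_lim f t l.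
Proof.
  intros [rho [Hr Hfg]] Hg e He. destruct (Hg e He) as [[d Hd] H].
  assert (P : 0 < Rmin d rho) by (unfold Rmin; destruct Rle_dec; simpl in *; lra).
  exists (mkposreal _ P). intros h Hh Hh2. simpl in Hh2.
  assert (Rmin d rho <= d) by apply Rmin_l. assert (Rmin d rho <= rho) by apply Rmin_r.
  rewrite (Hfg (t + h)), (Hfg t). apply H; simpl; auto; lra.
  rewrite Rminus_diag, Rabs_R0; lra.
  replace (t + h - t) with h by ring. lra.
Qed.

Lemma D_div f g t a b : derivable_pt_lim f t a -> derivable_pt_lim g t b -> g t <> 0 ->
  derivable_pt_lim (fun s => f s / g s) t ((a * g t - b * f t) / (g t)²).
Proof. intros; apply (derivable_pt_lim_div f g); auto. Qed.
Lemma D_comp f g t a b : derivable_pt_lim f t a -> derivable_pt_lim g (f t) b ->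
  derivable_pt_lim (fun s => g (f s)) t (b * a).
Proof. intros; apply (derivable_pt_lim_comp f g); auto. Qed.
Lemma D_sqrt f t a : derivable_pt_lim f t a -> 0 < f t ->
  derivable_pt_lim (fun s => sqrt (f s)) t (/ (2 * sqrt (f t)) * a).
Proof. intros. apply D_comp; auto. apply derivable_pt_lim_sqrt; auto. Qed.
Lemma D_asin0 : derivable_pt_lim asin 0 1.
Proof.
  assert (H : -1 < 0 < 1) by lra. apply (derive_pt_eq_1 _ _ _ (derivable_pt_asin 0 H)).
  rewrite derive_pt_asin. unfold Rsqr. replace (1 - 0 * 0) with 1 by ring. rewrite sqrt_1. field.
Qed.

Lemma theta_point (h1 h2 th r : R -> R) t d1 d2 :
  (forall s, 0 < r (th s)) ->
  (forall s, h1 s = r (th s) * cos (th s) /\ h2 s = r (th s) * sin (th s)) ->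
  continuity_pt th t -> derivable_pt_lim h1 t d1 -> derivable_pt_lim h2 t d2 ->
  derivable_pt_lim th t ((h1 t * d2 - h2 t * d1) / (h1 t ^ 2 + h2 t ^ 2)).
Proof.
  intros Hr Hrep Hc D1 D2.
  assert (HH : forall s, h1 s ^ 2 + h2 s ^ 2 = r (th s) ^ 2).
  { intros s. destruct (Hrep s) as [A B]. rewrite A, B. pose proof (sin2_cos2 (th s)). unfold Rsqr in H.
    replace ((r (th s) * cos (th s)) ^ 2 + (r (th s) * sin (th s)) ^ 2) with
      (r (th s) ^ 2 * (sin (th s) * sin (th s) + cos (th s) * cos (th s))) by ring.
    rewrite H. ring. }
  assert (Hsq : forall s, sqrt (h1 s ^ 2 + h2 s ^ 2) = r (th s)).
  { intros s. rewrite HH. apply sqrt_pow2. specialize (Hr s). lra. }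
  set (q := fun s => (h1 t * h2 s - h2 t * h1 s) / (sqrt (h1 t ^ 2 + h2 t ^ 2) * sqrt (h1 s ^ 2 + h2 s ^ 2))).
  assert (Hq : forall s, q s = sin (th s - th t)).
  { intros s. unfold q. rewrite !Hsq. destruct (Hrep s) as [A B]. destruct (Hrep t) as [A' B'].
    rewrite A, B, A', B', sin_minus. pose proof (Hr s). pose proof (Hr t). field. lra. }
  assert (Hpos : 0 < h1 t ^ 2 + h2 t ^ 2) by (rewrite HH; pose proof (Hr t); nra).
  apply D_loc with (fun s => th t + asin (q s)).
  { destruct (cont_eps th t 1 Hc ltac:(lra)) as [rho [Hrho Hrh]]. exists rho. split; auto.
    intros s Hs. rewrite Hq. rewrite asin_sin. ring. specialize (Hrh s Hs). pose proof PI2_1.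
    revert Hrh. unfold Rabs; destruct Rcase_abs; lra. }
  eapply D_eq. apply D_plus. apply D_const. apply D_comp.
  - unfold q. apply D_div.
    + apply D_minus; apply D_mult; try apply D_const; eauto.
    + apply D_mult. apply D_const. apply D_sqrt; [|exact Hpos]. apply D_plus; apply D_sq; eauto.
    + pose proof (sqrt_lt_R0 _ Hpos). apply Rgt_not_eq. apply Rmult_lt_0_compat; lra.
  - rewrite Hq, Rminus_diag, sin_0. apply D_asin0.
  - cbv beta. replace (h1 t * h2 t - h2 t * h1 t) with 0 by ring.
    pose proof (sqrt_lt_R0 _ Hpos). pose proof (sqrt_sqrt _ (Rlt_le _ _ Hpos)).
    set (sH := sqrt (h1 t ^ 2 + h2 t ^ 2)) in *. rewrite <- H0. unfold Rsqr. field. lra.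
Qed.


Lemma C1_from_ae (th G : R -> R) : loc_abs_cont th -> continuity G ->
  ae (fun t => derivable_pt_lim th t (G t)) -> forall t, derivable_pt_lim th t (G t).
Proof.
  intros Hac HG Hae t e He.
  destruct (cont_eps G t (e/2) (HG t) ltac:(lra)) as [d [Hd Hc]].
  exists (mkposreal d Hd). intros h Hh Hhd. simpl in Hhd.
  set (Phi := fun u => th u - G t * u).
  assert (LPhi : loc_abs_cont Phi) by (unfold Phi; lac).
  assert (Hneg : forall a b, t - d < a -> b < t + d ->
    negligible (fun u => a <= u <= b /\ ~ (exists l, derivable_pt_lim Phi u l /\ Rabs l <= e/2))).
  { intros a b Ha Hb. eapply negligible_sub; [|exact Hae]. intros u [Hu Hn] Hd'. apply Hn.
    exists (G u - G t). split.
    - unfold Phi. eapply D_eq. apply D_minus. exact Hd'. apply D_mult. apply D_const. apply D_id. cbv beta. ring.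
    - apply Rlt_le, Hc. unfold Rabs in *; repeat destruct Rcase_abs; lra. }
  assert (Key : Rabs (Phi (t + h) - Phi t) <= e / 2 * Rabs h).
  { destruct (Rle_dec 0 h).
    - rewrite (Rabs_right h) by lra. replace (e / 2 * h) with (e/2 * ((t + h) - t)) by ring.
      apply KLg; try lra. apply LPhi; lra. apply Hneg; unfold Rabs in Hhd; destruct Rcase_abs; lra.
    - rewrite (Rabs_left h) by lra. rewrite <- Rabs_Ropp. replace (- (Phi (t + h) - Phi t)) with (Phi t - Phi (t + h)) by ring.
      replace (e / 2 * - h) with (e/2 * (t - (t + h))) by ring.
      apply KLg; try lra. apply LPhi; lra. apply Hneg; unfold Rabs in Hhd; destruct Rcase_abs; lra. }
  unfold Phi in Key.
  replace ((th (t + h) - th t) / h - G t) with ((th (t + h) - G t * (t + h) - (th t - G t * t)) / h) by (field; auto).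
  unfold Rdiv. rewrite Rabs_mult, Rabs_inv.
  assert (0 < Rabs h) by (apply Rabs_pos_lt; auto).
  apply Rle_lt_trans with (e / 2 * Rabs h * / Rabs h).
  apply Rmult_le_compat_r; [left; apply Rinv_0_lt_compat; auto| exact Key].
  field_simplify; lra.
Qed.

Lemma theta_lac (h1 h2 th r : R -> R) :
  (forall s, 0 < r (th s)) ->
  (forall s, h1 s = r (th s) * cos (th s) /\ h2 s = r (th s) * sin (th s)) ->
  continuity th -> loc_abs_cont h1 -> loc_abs_cont h2 -> loc_abs_cont th.
Proof.
  intros Hr Hrep Hc L1 L2 a b Hab.
  assert (HH : forall s, h1 s ^ 2 + h2 s ^ 2 = r (th s) ^ 2).
  { intros s. destruct (Hrep s) as [A B]. rewrite A, B. pose proof (sin2_cos2 (th s)). unfold Rsqr in H.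
    replace ((r (th s) * cos (th s)) ^ 2 + (r (th s) * sin (th s)) ^ 2) with
      (r (th s) ^ 2 * (sin (th s) * sin (th s) + cos (th s) * cos (th s))) by ring.
    rewrite H. ring. }
  destruct (Heine th (fun c => a <= c <= b) (compact_P3 a b) (fun x _ => Hc x) (mkposreal 1 Rlt_0_1)) as [[rho Hrho] Hu].
  simpl in Hu.
  destruct (cont_bounded h1 a b (lac_cont _ L1) Hab) as [M1 HM1].
  destruct (cont_bounded h2 a b (lac_cont _ L2) Hab) as [M2 HM2].
  assert (LH : loc_abs_cont (fun s => h1 s ^ 2 + h2 s ^ 2)) by lac.
  destruct (continuity_ab_min _ a b Hab (fun c _ => lac_cont _ LH c)) as [mx [Hmx Hmxr]].
  set (mH := h1 mx ^ 2 + h2 mx ^ 2) in *.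
  assert (HmH : 0 < mH) by (unfold mH; rewrite HH; pose proof (Hr mx); nra).
  assert (0 <= M1) by (eapply Rle_trans; [apply Rabs_pos|apply (HM1 a); lra]).
  assert (0 <= M2) by (eapply Rle_trans; [apply Rabs_pos|apply (HM2 a); lra]).
  apply (ACdom th h1 h2 a b rho (2 * (M1 + M2) / mH)); try apply L1; try apply L2; auto.
  { apply Rmult_le_pos. lra. left; apply Rinv_0_lt_compat; auto. }
  intros c d Hac Hcd Hdb Hdc.
  assert (Hdl : Rabs (th d - th c) <= 1).
  { left. rewrite <- Rabs_Ropp. replace (- (th d - th c)) with (th c - th d) by ring. apply Hu; try lra.
    rewrite Rabs_left1; lra. }
  pose proof (sin_lower _ Hdl) as Hs.
  destruct (Hrep c) as [A1 B1]. destruct (Hrep d) as [A2 B2].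
  set (Rc := r (th c)) in *. set (Rd := r (th d)) in *.
  assert (HN : Rc * Rd * sin (th d - th c) = h1 c * (h2 d - h2 c) - h2 c * (h1 d - h1 c)).
  { rewrite A1, B1, A2, B2, sin_minus. ring. }
  assert (HRc : 0 < Rc) by apply Hr. assert (HRd : 0 < Rd) by apply Hr.
  assert (Hm1 : mH <= Rc ^ 2) by (unfold Rc; rewrite <- HH; apply Hmx; lra).
  assert (Hm2 : mH <= Rd ^ 2) by (unfold Rd; rewrite <- HH; apply Hmx; lra).
  assert (HRR : mH <= Rc * Rd).
  { destruct (Rle_dec mH (Rc * Rd)); auto. exfalso. assert (Rc * Rd < mH) by lra.
    assert (HP : 0 < Rc * Rd) by nra.
    assert ((Rc * Rd) * (Rc * Rd) < mH * mH) by nra.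
    assert (mH * mH <= Rc ^ 2 * Rd ^ 2) by nra. nra. }
  assert (HNb : Rabs (h1 c * (h2 d - h2 c) - h2 c * (h1 d - h1 c)) <=
     (M1 + M2) * (Rabs (h1 d - h1 c) + Rabs (h2 d - h2 c))).
  { eapply Rle_trans. apply Rabs_triang. rewrite Rabs_Ropp, !Rabs_mult.
    specialize (HM1 c ltac:(lra)). specialize (HM2 c ltac:(lra)).
    pose proof (Rabs_pos (h1 d - h1 c)). pose proof (Rabs_pos (h2 d - h2 c)).
    pose proof (Rabs_pos (h1 c)). pose proof (Rabs_pos (h2 c)). nra. }
  rewrite <- HN, !Rabs_mult, (Rabs_right Rc), (Rabs_right Rd) in HNb by lra.
  set (X := Rabs (h1 d - h1 c) + Rabs (h2 d - h2 c)) in *.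
  set (Y := Rabs (th d - th c)) in *. set (S := Rabs (sin (th d - th c))) in *.
  assert (0 <= S) by apply Rabs_pos.
  assert (mH * S <= (M1 + M2) * X) by nra.
  apply (Rmult_le_reg_l mH); auto.
  replace (mH * (2 * (M1 + M2) / mH * X)) with (2 * ((M1 + M2) * X)) by (field; lra).
  nra.
Qed.


Theorem mainTheorem2
  (F : R -> R -> R) (HF : is_norm2 F)
  (x y z v u1 u2 p1 p2 p3 p4 : R -> R)
  (* admissible control: u(t) in U for a.e. t *)
  (Hu : ae (fun t => F (u1 t) (u2 t) <= 1))
  (* trajectory from the identity, absolutely continuous, solving the system a.e. *)
  (H0 : x 0 = 0 /\ y 0 = 0 /\ z 0 = 0 /\ v 0 = 0)
  (Hac : loc_abs_cont x /\ loc_abs_cont y /\ loc_abs_cont z /\ loc_abs_cont v)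
  (Hx : ae (fun t => derivable_pt_lim x t (u1 t)))
  (Hy : ae (fun t => derivable_pt_lim y t (u2 t)))
  (Hz : ae (fun t => derivable_pt_lim z t (/2 * (x t * u2 t - y t * u1 t))))
  (Hv : ae (fun t => derivable_pt_lim v t
          (- (/2 * (z t + /6 * x t * y t)) * u1 t + /12 * x t ^ 2 * u2 t)))
  (* nowhere vanishing absolutely continuous covector solving the adjoint system a.e. *)
  (Hpac : loc_abs_cont p1 /\ loc_abs_cont p2 /\ loc_abs_cont p3 /\ loc_abs_cont p4)
  (Hpnz : forall t, ~ (p1 t = 0 /\ p2 t = 0 /\ p3 t = 0 /\ p4 t = 0))
  (Hp1 : ae (fun t => derivable_pt_lim p1 t
          (/12 * p4 t * y t * u1 t - (/2 * p3 t + /6 * p4 t * x t) * u2 t)))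
  (Hp2 : ae (fun t => derivable_pt_lim p2 t ((/2 * p3 t + /12 * p4 t * x t) * u1 t)))
  (Hp3 : ae (fun t => derivable_pt_lim p3 t (/2 * p4 t * u1 t)))
  (Hp4 : ae (fun t => derivable_pt_lim p4 t 0))
  (* maximum condition, normal case M = 1 *)
  (Hmax : ae (fun t =>
     let h1 := ham1 (p1 t) (p3 t) (p4 t) (x t) (y t) (z t) in
     let h2 := ham2 (p2 t) (p3 t) (p4 t) (x t) in
     h1 * u1 t + h2 * u2 t = 1 /\ FU_is F h1 h2 1)) :
  let f1 := p1 0 in let f2 := p2 0 in let f3 := p3 0 in let f4 := p4 0 in
  let h1 := fun t => ham1 (p1 t) (p3 t) (p4 t) (x t) (y t) (z t) in
  let h2 := fun t => ham2 (p2 t) (p3 t) (p4 t) (x t) in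
  (* (i) *)
  (forall t,
     p4 t = f4 /\
     p3 t = f3 + /2 * f4 * x t /\
     p2 t = f2 + /2 * f3 * x t + /6 * f4 * x t ^ 2 /\
     p1 t = f1 - /2 * f3 * y t - /6 * f4 * (x t * y t + 3 * z t) /\
     h1 t = f1 - (f3 + /2 * f4 * x t) * y t - f4 * z t /\
     h2 t = f2 + (f3 + /2 * f4 * x t) * x t) /\
  (* (ii) *)
  ae (fun t => derivable_pt_lim h1 t (- (f3 + f4 * x t) * u2 t) /\
               derivable_pt_lim h2 t ((f3 + f4 * x t) * u1 t)) /\
  (forall t, /2 * (f3 + f4 * x t) ^ 2 - f4 * h2 t = /2 * f3 ^ 2 - f2 * f4) /\
  (* (iii) *)
  (forall t, f1 * x t + f2 * y t + (2 * f3 + /2 * f4 * x t) * z t + 3 * f4 * v t = t) /\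
  (* (iv) *)
  (forall (r th : R -> R),
     (forall a, 0 < r a /\ FU_is F (r a * cos a) (r a * sin a) 1) ->
     continuity th ->
     (forall t, h1 t = r (th t) * cos (th t) /\ h2 t = r (th t) * sin (th t)) ->
     exists dth : R -> R,
       continuity dth /\
       forall t, derivable_pt_lim th t (dth t) /\
         f3 + f4 * x t = r (th t) ^ 2 * dth t /\
         dth t ^ 2 = (f3 ^ 2 + 2 * f4 * (r (th t) * sin (th t) - f2)) / r (th t) ^ 4).
Proof.
  intros f1 f2 f3 f4 h1 h2.
  destruct H0 as [x0 [y0 [z0 v0]]]. destruct Hac as [Lx [Ly [Lz Lv]]].
  destruct Hpac as [L1 [L2 [L3 L4]]].
  set (Good := fun t => derivable_pt_lim x t (u1 t) /\ derivable_pt_lim y t (u2 t) /\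
     derivable_pt_lim z t (/2 * (x t * u2 t - y t * u1 t)) /\
     derivable_pt_lim v t (- (/2 * (z t + /6 * x t * y t)) * u1 t + /12 * x t ^ 2 * u2 t) /\
     derivable_pt_lim p1 t (/12 * p4 t * y t * u1 t - (/2 * p3 t + /6 * p4 t * x t) * u2 t) /\
     derivable_pt_lim p2 t ((/2 * p3 t + /12 * p4 t * x t) * u1 t) /\
     derivable_pt_lim p3 t (/2 * p4 t * u1 t) /\ derivable_pt_lim p4 t 0 /\
     h1 t * u1 t + h2 t * u2 t = 1).
  assert (HG : ae Good).
  { unfold Good. repeat apply ae_and; auto.
    eapply ae_mono; [|exact Hmax]. intros t [A _]. exact A. }
  assert (S4 : forall t, p4 t = f4).
  { intro t. apply (ae_const p4 L4). eapply ae_mono; [|exact HG]. intros s Hs; unfold Good in Hs; apply Hs. }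
  assert (S3 : forall t, p3 t = f3 + /2 * f4 * x t).
  { assert (E : forall s t, (fun t => p3 t - /2 * f4 * x t) s = (fun t => p3 t - /2 * f4 * x t) t).
    { apply ae_const. lac.
      eapply ae_mono; [|exact HG]. intros s Hs. unfold Good in Hs.
      destruct Hs as (Dx & Dy & Dz & Dv & D1 & D2 & D3 & D4 & Hh).
      eapply D_eq. dtac. cbv beta. rewrite S4. ring. }
    intro t. specialize (E t 0). simpl in E. rewrite x0 in E. unfold f3. lra. }
  assert (S2 : forall t, p2 t = f2 + /2 * f3 * x t + /6 * f4 * x t ^ 2).
  { assert (E : forall s t, (fun t => p2 t - /2 * f3 * x t - /6 * f4 * x t ^ 2) s = (fun t => p2 t - /2 * f3 * x t - /6 * f4 * x t ^ 2) t).
    { apply ae_const. lac.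
      eapply ae_mono; [|exact HG]. intros s Hs. unfold Good in Hs.
      destruct Hs as (Dx & Dy & Dz & Dv & D1 & D2 & D3 & D4 & Hh).
      eapply D_eq. dtac. cbv beta. rewrite S4, S3. field. }
    intro t. specialize (E t 0). simpl in E. rewrite x0 in E. unfold f2. lra. }
  assert (S1 : forall t, p1 t = f1 - /2 * f3 * y t - /6 * f4 * (x t * y t + 3 * z t)).
  { assert (E : forall s t, (fun t => p1 t + /2 * f3 * y t + /6 * f4 * (x t * y t + 3 * z t)) s = (fun t => p1 t + /2 * f3 * y t + /6 * f4 * (x t * y t + 3 * z t)) t).
    { apply ae_const. lac.
      eapply ae_mono; [|exact HG]. intros s Hs. unfold Good in Hs.
      destruct Hs as (Dx & Dy & Dz & Dv & D1 & D2 & D3 & D4 & Hh).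
      eapply D_eq. dtac. cbv beta. rewrite S4, S3. field. }
    intro t. specialize (E t 0). simpl in E. rewrite x0, y0, z0 in E. unfold f1. lra. }
  assert (S5a : forall t, h1 t = f1 - (f3 + /2 * f4 * x t) * y t - f4 * z t).
  { intro t. unfold h1, ham1. rewrite S1, S3, S4. field. }
  assert (S5b : forall t, h2 t = f2 + (f3 + /2 * f4 * x t) * x t).
  { intro t. unfold h2, ham2. rewrite S2, S3, S4. field. }
  assert (P3 : forall t, f1 * x t + f2 * y t + (2 * f3 + /2 * f4 * x t) * z t + 3 * f4 * v t = t).
  { assert (E : forall s t, (fun t => f1 * x t + f2 * y t + (2 * f3 + /2 * f4 * x t) * z t + 3 * f4 * v t - t) s = (fun t => f1 * x t + f2 * y t + (2 * f3 + /2 * f4 * x t) * z t + 3 * f4 * v t - t) t).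
    { apply ae_const. lac.
      eapply ae_mono; [|exact HG]. intros s Hs. unfold Good in Hs.
      destruct Hs as (Dx & Dy & Dz & Dv & D1 & D2 & D3 & D4 & Hh).
      rewrite S5a, S5b in Hh.
      eapply D_eq. dtac. cbv beta. lra. }
    intro t. specialize (E t 0). simpl in E. rewrite x0, y0, z0, v0 in E. lra. }
  split.
  { intro t. repeat split; auto. }
  assert (P2a : ae (fun t => derivable_pt_lim h1 t (- (f3 + f4 * x t) * u2 t) /\
               derivable_pt_lim h2 t ((f3 + f4 * x t) * u1 t))).
  { eapply ae_mono; [|exact HG]. intros t Ht. unfold Good in Ht.
    destruct Ht as (Dx & Dy & Dz & Dv & D1 & D2 & D3 & D4 & Hh). split.
    - apply D_ext with (fun s => f1 - (f3 + /2 * f4 * x s) * y s - f4 * z s); [exact S5a|].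
      eapply D_eq. dtac. cbv beta. field.
    - apply D_ext with (fun s => f2 + (f3 + /2 * f4 * x s) * x s); [exact S5b|].
      eapply D_eq. dtac. cbv beta. field. }
  split; [exact P2a|].
  assert (Cst : forall t, /2 * (f3 + f4 * x t) ^ 2 - f4 * h2 t = /2 * f3 ^ 2 - f2 * f4).
  { intro t. rewrite S5b. field. }
  split; [exact Cst|].
  split; [exact P3|].
  intros r th Hr Hc Hrep.
  assert (Hr' : forall s, 0 < r (th s)) by (intro s; apply Hr).
  assert (Lh1 : loc_abs_cont h1).
  { assert (E : h1 = fun s => f1 - (f3 + /2 * f4 * x s) * y s - f4 * z s) by (extensionality s; apply S5a).
    rewrite E. lac. }
  assert (Lh2 : loc_abs_cont h2).
  { assert (E : h2 = fun s => f2 + (f3 + /2 * f4 * x s) * x s) by (extensionality s; apply S5b).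
    rewrite E. lac. }
  assert (Lth := theta_lac h1 h2 th r Hr' Hrep Hc Lh1 Lh2).
  assert (HH : forall s, h1 s ^ 2 + h2 s ^ 2 = r (th s) ^ 2).
  { intros s. destruct (Hrep s) as [A B]. rewrite A, B. pose proof (sin2_cos2 (th s)). unfold Rsqr in H.
    replace ((r (th s) * cos (th s)) ^ 2 + (r (th s) * sin (th s)) ^ 2) with
      (r (th s) ^ 2 * (sin (th s) * sin (th s) + cos (th s) * cos (th s))) by ring.
    rewrite H. ring. }
  assert (Hpos : forall s, 0 < h1 s ^ 2 + h2 s ^ 2) by (intro s; rewrite HH; pose proof (Hr' s); nra).
  set (dth := fun t => (f3 + f4 * x t) / (h1 t ^ 2 + h2 t ^ 2)).
  assert (Hcont : continuity dth).
  { intro t. unfold dth. apply (continuity_pt_div (fun t => f3 + f4 * x t) (fun t => h1 t ^ 2 + h2 t ^ 2)).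
    apply lac_cont; lac. apply lac_cont; lac. apply Rgt_not_eq, Hpos. }
  assert (Hder : forall t, derivable_pt_lim th t (dth t)).
  { apply C1_from_ae; auto. eapply ae_mono; [|exact (ae_and _ _ HG P2a)].
    intros t [Gt [Dh1 Dh2]]. unfold Good in Gt.
    destruct Gt as (Dx & Dy & Dz & Dv & D1 & D2 & D3 & D4 & Hh).
    eapply D_eq. apply (theta_point h1 h2 th r t _ _ Hr' Hrep (Hc t) Dh1 Dh2).
    unfold dth. unfold Rdiv. f_equal.
    replace (h1 t * ((f3 + f4 * x t) * u1 t) - h2 t * (- (f3 + f4 * x t) * u2 t)) with
      ((f3 + f4 * x t) * (h1 t * u1 t + h2 t * u2 t)) by ring. rewrite Hh. ring. }
  exists dth. split; [exact Hcont|]. intro t. split; [apply Hder|].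
  pose proof (Hpos t) as Pt. pose proof (Hr' t) as Rt. split.
  - rewrite <- HH. unfold dth. field. lra.
  - destruct (Hrep t) as [_ B]. rewrite <- B.
    replace (r (th t) ^ 4) with ((h1 t ^ 2 + h2 t ^ 2) ^ 2) by (rewrite HH; ring).
    unfold dth. pose proof (Cst t).
    replace (((f3 + f4 * x t) / (h1 t ^ 2 + h2 t ^ 2)) ^ 2) with
      ((f3 + f4 * x t) ^ 2 / (h1 t ^ 2 + h2 t ^ 2) ^ 2) by (field; lra).
    replace ((f3 + f4 * x t) ^ 2) with (f3 ^ 2 + 2 * f4 * (h2 t - f2)) by lra. reflexivity.
Qed.
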